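(* Let $\mathbb X$ be a separable reflexive Banach space and $\mu\in\mathbb X$. Fix $\alpha\in(0,\tfrac12)$, $0<p<\alpha$ and $\varepsilon>0$. Let $\hat\mu_1,\ldots,\hat\mu_k$ be random elements of $\mathbb X$, and let $J\subseteq\{1,\ldots,k\}$ have $|J|=(1-\tau)k$, where $0\le\tau<\frac{\alpha-p}{1-p}$. Assume: - the $\hat\mu_j$, $j\in J$, are independent; - $\Pr(\|\hat\mu_j-\mu\|>\varepsilon)\le p$ for all $j\in J$; - the $\hat\mu_j$ with $j\notin J$ are arbitrary. Let $\hat\mu=\mathrm{med}(\hat\mu_1,\ldots,\hat\mu_k)$. Then $$\Pr\big(\|\hat\mu-\mu\|>C_\alpha\varepsilon\big)\le\exp\Big(-k(1-\tau)\,\psi\Big(\tfrac{\alpha-\tau}{1-\tau};p\Big)\Big).$$ Here $C_\alpha=\frac{2(1-\alpha)}{1-2\alpha}$ in general, and $C_\alpha=(1-\alpha)\sqrt{\frac1{1-2\alpha}}$ when $\mathbb X$ is a Hilbert space.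
   Context: $\mathrm{med}(x_1,\ldots,x_k)$ denotes a geometric median, i.e. any minimizer over $y\in\mathbb X$ of $\sum_{j=1}^k\|y-x_j\|$. For $0<p<a<\tfrac12$, $$\psi(a;p)=(1-a)\log\frac{1-a}{1-p}+a\log\frac{a}{p}.$$ *)

(* Defs.v *)
From HB Require Import structures.
From mathcomp Require Import all_boot all_order all_algebra.
From mathcomp Require Import all_classical all_reals all_analysis.
Set Implicit Arguments. Unset Strict Implicit. Unset Printing Implicit Defensive.
Import Order.TTheory GRing.Theory Num.Theory.
Import numFieldNormedType.Exports.
Local Open Scope classical_set_scope.
Local Open Scope ring_scope.

Definition psi {R : realType} (a p : R) : R :=
  (1 - a) * ln ((1 - a) / (1 - p)) + a * ln (a / p).

Definition is_geomed {R : realType} {V : normedModType R} {k : nat}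
  (x : 'I_k -> V) (y : V) : Prop :=
  forall z : V, \sum_(j < k) `|y - x j| <= \sum_(j < k) `|z - x j|.

Definition borel_set {V : topologicalType} (B : set V) : Prop := <<s open >> B.

Definition random_element {d : measure_display} {T : measurableType d}
  {V : topologicalType} (X : T -> V) : Prop :=
  forall B : set V, borel_set B -> measurable (X @^-1` B).

Definition indep_family {R : realType} {d : measure_display} {T : measurableType d}
  (P : probability T R) {V : topologicalType} {k : nat}
  (J : {set 'I_k}) (X : 'I_k -> T -> V) : Prop :=
  forall (K : {set 'I_k}) (B : 'I_k -> set V),
    K \subset J -> (forall j, j \in K -> borel_set (B j)) ->
    P (\bigcap_(j in [set j | j \in K]) (X j @^-1` B j))
    = (\prod_(j in K) P (X j @^-1` B j))%E.

Definition separable_space (V : topologicalType) : Prop :=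
  exists D : set V, countable D /\ dense D.

Definition dual_elt {R : realType} {V : normedModType R} (f : V -> R) : Prop :=
  (forall (a : R) (x y : V), f (a *: x + y) = a * f x + f y) /\ continuous f.

(* Boundedness of Phi is expressed through the
   operator norm: |Phi f| <= C * M whenever |f x| <= M ||x|| for all x. *)
Definition reflexive_space {R : realType} (V : normedModType R) : Prop :=
  forall Phi : (V -> R) -> R,
    (forall (a : R) (f g : V -> R), dual_elt f -> dual_elt g ->
        Phi (fun x => a * f x + g x) = a * Phi f + Phi g) ->
    (exists C : R, forall (f : V -> R) (M : R), dual_elt f -> 0 <= M ->
        (forall x, `|f x| <= M * `|x|) -> `|Phi f| <= C * M) ->
    exists x0 : V, forall f, dual_elt f -> Phi f = f x0.

Definition hilbert_norm {R : realType} (V : normedModType R) : Prop :=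
  exists ip : V -> V -> R,
    (forall x y, ip x y = ip y x) /\
    (forall (a : R) (x y z : V), ip (a *: x + y) z = a * ip x z + ip y z) /\
    (forall x, `|x| ^+ 2 = ip x x).

(* Main.v *)
Set Warnings "-all".
Require Import Defs.
From HB Require Import structures.
From mathcomp Require Import all_boot all_order all_algebra.
From mathcomp Require Import all_classical all_reals all_analysis.
From mathcomp Require Import ring lra zify.
Import Order.TTheory GRing.Theory Num.Theory.
Import numFieldNormedType.Exports.
Local Open Scope classical_set_scope.
Local Open Scope ring_scope.
Lemma sum_if (R : realType) k (b : pred 'I_k) (A B : R) :
  \sum_(j < k) (if b j then A else B) = #|b|%:R * A + (k%:R - #|b|%:R) * B.
Proof.
rewrite (bigID b) /=.
rewrite (eq_bigr (fun _ => A)); last by move=> j ->.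
rewrite [X in _ + X](eq_bigr (fun _ => B)); last by move=> j /negbTE ->.
rewrite !sumr_const.
have h := cardC b; rewrite card_ord in h.
have -> : #|[pred j | ~~ b j]| = #|[predC b]| by apply: eq_card.
have hk : forall x y, (x + y = k -> y = k - x /\ x <= k)%N by lia.
have [-> hb] := hk _ _ h.
by rewrite -[A *+ _]mulr_natl -[B *+ _]mulr_natl natrB.
Qed.

Lemma geo_banach (R : realType) (V : normedModType R) k (x : 'I_k -> V) (m z : V)
  (r alpha : R) :
  (0 < k)%N -> 0 < alpha < 1/2 -> 0 <= r -> is_geomed x m ->
  (2 * (1 - alpha) / (1 - 2 * alpha)) * r < `|m - z| ->
  alpha * k%:R < #|[pred j | r < `|x j - z|]|%:R.
Proof.
move=> k0 /andP[a0 a1] r0 Hm HD.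
set D := `|m - z|; set b := #|_|.
rewrite ltNge; apply/negP => hb.
have key : \sum_(j < k) (`|z - x j| - `|m - x j|)
   <= \sum_(j < k) (if r < `|x j - z| then D else 2 * r - D).
  apply: ler_sum => j _; case: ifP => h.
  - have := ler_distD m z (x j); rewrite (distrC z m) -/D; lra.
  - have := ler_distD (x j) m z; rewrite -/D; move: h => /negbT; rewrite -leNgt.
    rewrite (distrC z) ; lra.
rewrite sum_if -/b in key.
have geo := Hm z; rewrite sumrB in key.
have kpos : 1 <= k%:R :> R by rewrite ler1n.
have b0 : 0 <= b%:R :> R by [].
have h2a : 0 < 1 - 2 * alpha by lra.
have HD' : 2 * (1 - alpha) * r < (1 - 2 * alpha) * D.
  move: HD; rewrite mulrAC ltr_pdivrMr // -/D; lra.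
have p1 : 0 < (k%:R - 2 * b%:R) * ((1 - 2 * alpha) * D - 2 * (1 - alpha) * r).
  have : 0 < k%:R * (1 - 2 * alpha) :> R by apply: mulr_gt0; lra.
  move=> hk2; apply: mulr_gt0; lra.
have p2 : 0 <= r * (alpha * k%:R - b%:R) by apply: mulr_ge0; lra.
have X : (1 - 2 * alpha) * (b%:R * D + (k%:R - b%:R) * (2 * r - D)) < 0.
  have -> : (1 - 2 * alpha) * (b%:R * D + (k%:R - b%:R) * (2 * r - D))
    = - ((k%:R - 2 * b%:R) * ((1 - 2 * alpha) * D - 2 * (1 - alpha) * r))
      - 2 * (r * (alpha * k%:R - b%:R)) by ring.
  lra.
have : 0 <= b%:R * D + (k%:R - b%:R) * (2 * r - D) by lra.
move=> Y; have := mulr_ge0 (ltW h2a) Y; lra.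
Qed.

Lemma hilbert_sq (R : realType) (V : normedModType R) (ip : V -> V -> R) :
  (forall x y, ip x y = ip y x) ->
  (forall (a : R) (x y z : V), ip (a *: x + y) z = a * ip x z + ip y z) ->
  (forall x, `|x| ^+ 2 = ip x x) ->
  forall (x y : V) (a : R), `|x + a *: y| ^+ 2 = `|x| ^+ 2 + 2 * a * ip x y + a ^+ 2 * `|y| ^+ 2.
Proof.
move=> sym lin nrm x y a.
have ip0 : forall w, ip 0 w = 0.
  move=> w; have := lin 1 0 0 w; rewrite scale1r addr0 mul1r => h; lra.
have ipZ : forall (c : R) v w, ip (c *: v) w = c * ip v w.
  by move=> c v w; have := lin c v 0 w; rewrite addr0 ip0 addr0.
have ipD : forall v v' w, ip (v + v') w = ip v w + ip v' w.
  by move=> v v' w; have := lin 1 v v' w; rewrite scale1r mul1r.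
rewrite !nrm ipD ipZ (sym x (x + _)) (sym y (x + _)) !ipD !ipZ (sym y x).
rewrite expr2; ring.
Qed.

Lemma small_t (R : realType) (c1 c2 c3 : R) : 0 < c1 -> 0 < c2 -> 0 < c3 ->
  exists t, [/\ 0 < t, t <= c1, t <= c2 & t <= c3].
Proof.
move=> h1 h2 h3; exists (Num.min (Num.min c1 c2) c3); split.
- by rewrite !lt_min h1 h2 h3.
- by rewrite !ge_min lexx.
- by rewrite !ge_min lexx orbT.
- by rewrite !ge_min lexx orbT.
Qed.

Lemma sq_le (R : realType) (x y : R) : 0 <= x -> 0 <= y -> x ^+ 2 <= y ^+ 2 -> x <= y.
Proof. move=> hx hy; rewrite !expr2 => h; nra. Qed.

Lemma geo_hilbert (R : realType) (V : normedModType R) k (x : 'I_k -> V) (m z : V)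
  (r alpha : R) :
  (0 < k)%N -> 0 < alpha < 1/2 -> 0 < r -> hilbert_norm V -> is_geomed x m ->
  ((1 - alpha) * Num.sqrt (1 / (1 - 2 * alpha))) * r < `|m - z| ->
  alpha * k%:R < #|[pred j | r < `|x j - z|]|%:R.
Proof.
move=> k0 /andP[a0 a1] r0 [ip [sym [lin nrm]]] Hm HD.
have nsq := @hilbert_sq _ _ ip sym lin nrm.
set D := `|m - z|; set b := #|_|.
rewrite ltNge; apply/negP => hb.
have h2a : 0 < 1 - 2 * alpha by lra.
set s := Num.sqrt _ in HD.
have s0 : 0 <= s by apply: sqrtr_ge0.
have s2 : s ^+ 2 = 1 / (1 - 2 * alpha) by rewrite sqr_sqrtr // divr_ge0 // ltW.
have s2' : s ^+ 2 * (1 - 2 * alpha) = 1 by rewrite s2 mul1r mulVf // gt_eqF.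
have kpos : 1 <= k%:R :> R by rewrite ler1n.
have b0 : 0 <= b%:R :> R by [].
have D0 : 0 <= D by exact: normr_ge0.
have HD0 : 0 <= (1 - alpha) * s * r by rewrite mulr_ge0 ?(ltW r0) // mulr_ge0 //; lra.
have HD2 : ((1 - alpha) * s * r) ^+ 2 < D ^+ 2.
  by rewrite ltr_pXn2r // ?nnegrE //; apply: le_trans (ltW HD).
have HD3 : (1 - alpha) ^+ 2 * r ^+ 2 < D ^+ 2 * (1 - 2 * alpha).
  have : ((1 - alpha) * s * r) ^+ 2 * (1 - 2 * alpha) < D ^+ 2 * (1 - 2 * alpha).
    by rewrite ltr_pM2r.
  have -> : ((1 - alpha) * s * r) ^+ 2 * (1 - 2 * alpha)
     = (1 - alpha) ^+ 2 * r ^+ 2 * (s ^+ 2 * (1 - 2 * alpha)) by ring.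
  by rewrite s2' mulr1.
have rD : r < D.
  have h1 : r ^+ 2 * (1 - 2 * alpha) < D ^+ 2 * (1 - 2 * alpha).
    rewrite !expr2 in HD3 *; nra.
  rewrite ltr_pM2r // in h1.
  by rewrite -(ltr_pXn2r (n := 2)) // nnegrE ltW.
set rho := Num.sqrt (D ^+ 2 - r ^+ 2).
have rho2 : rho ^+ 2 = D ^+ 2 - r ^+ 2.
  rewrite sqr_sqrtr // subr_ge0 ler_pXn2r // ?nnegrE; [exact: ltW | exact: ltW].
have rho0 : 0 < rho.
  rewrite sqrtr_gt0 subr_gt0 ltr_pXn2r // ?nnegrE //; exact: ltW.
have FC : 0 < (1 - alpha) * rho - alpha * D.
  rewrite subr_gt0.
  rewrite -(ltr_pXn2r (n := 2)) ?nnegrE; last 3 first.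
  - by [].
  - apply: mulr_ge0 => //; lra.
  - apply: mulr_ge0 => //; lra.
  rewrite !exprMn rho2; rewrite !expr2 in HD3 *; nra.
set g := (k%:R - b%:R : R).
have gk : (1 - alpha) * k%:R <= g by rewrite /g; lra.
have FD : b%:R * D < g * rho.
  have h1 : b%:R * D <= alpha * k%:R * D by rewrite ler_pM2r //; nra.
  have h2 : alpha * k%:R * D < (1 - alpha) * k%:R * rho.
    have hk0 : 0 < k%:R :> R by lra.
    have := mulr_gt0 hk0 (FC : 0 < (1 - alpha) * rho - alpha * D); nra.
  have h3 : (1 - alpha) * k%:R * rho <= g * rho by rewrite ler_pM2r.
  lra.
have g0 : 0 < g.
  have : 0 < (1 - alpha) * k%:R by apply: mulr_gt0; lra.
  lra.
set delta := D - r.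
have d0 : 0 < delta by rewrite /delta subr_gt0.
set K := D ^+ 2 / delta.
have D2 : 0 < D ^+ 2 by rewrite exprn_gt0 // (le_lt_trans (ltW r0) rD).
have K0 : 0 < K by rewrite /K divr_gt0.
have Kd : K * delta = D ^+ 2 by rewrite /K mulrVK // unitfE gt_eqF.
have FD' : 0 < g * rho - b%:R * D by rewrite subr_gt0.
have [t [t0 tc1 tc2 tc3]] := @small_t _ (delta / rho) (D ^+ 2 / (2 * K * rho))
   ((g * rho - b%:R * D) / (2 * g * K))
   (divr_gt0 d0 rho0) (divr_gt0 D2 (mulr_gt0 (mulr_gt0 (ltr0n _ 2) K0) rho0))
   (divr_gt0 FD' (mulr_gt0 (mulr_gt0 (ltr0n _ 2) g0) K0)).
rewrite ler_pdivlMr // in tc1.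
rewrite ler_pdivlMr ?(mulr_gt0 (mulr_gt0 (ltr0n _ 2) K0) rho0) // in tc2.
rewrite ler_pdivlMr ?(mulr_gt0 (mulr_gt0 (ltr0n _ 2) g0) K0) // in tc3.
set u := z - m.
have nu : `|u| = D by rewrite /u distrC.
set y := m + t *: u.
have Hy := Hm y.
have bound : forall j : 'I_k, `|y - x j| <= `|m - x j| +
     (if r < `|x j - z| then t * D else t ^+ 2 * K - t * rho).
  move=> j; have -> : y - x j = (m - x j) + t *: u by rewrite /y addrAC.
  case: ifP => hj.
  - by rewrite (le_trans (ler_normD _ _)) // normrZ nu ger0_norm // ltW.
  move/negbT: hj; rewrite -leNgt => hj.
  set w := m - x j; set a := `|w|.
  have hw : `|w + 1 *: u| ^+ 2 <= r ^+ 2.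
    have -> : w + 1 *: u = z - x j by rewrite scale1r /w /u addrC addrA subrK.
    rewrite ler_pXn2r ?nnegrE //; last exact: ltW.
    by rewrite distrC.
  rewrite nsq nu -/a in hw.
  have hd : delta <= a.
    have := ler_distD (x j) m z; rewrite -/D /delta -/w -/a; lra.
  have ha0 : 0 <= a by exact: normr_ge0.
  have Ka : D ^+ 2 <= K * a by rewrite -Kd ler_pM2l.
  apply: sq_le; first exact: normr_ge0.
    have : 0 <= t ^+ 2 * K by apply: mulr_ge0; [apply: exprn_ge0; exact: ltW | exact: ltW].
    lra.
  rewrite nsq nu -/a.
  have hip : ip w u <= (r ^+ 2 - a ^+ 2 - D ^+ 2) / 2 by lra.
  have q1 : 2 * t * ip w u <= t * (r ^+ 2 - a ^+ 2 - D ^+ 2).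
    have := ler_wpM2l (ltW t0) hip; lra.
  have q2 : t * (r ^+ 2 - a ^+ 2 - D ^+ 2) <= - 2 * t * a * rho.
    have : 0 <= t * (a - rho) ^+ 2 by rewrite mulr_ge0 ?sqr_ge0 // ltW.
    have -> : r ^+ 2 = D ^+ 2 - rho ^+ 2 by lra.
    move=> h; have -> : t * (D ^+ 2 - rho ^+ 2 - a ^+ 2 - D ^+ 2)
       = - 2 * t * a * rho - t * (a - rho) ^+ 2 by ring.
    lra.
  have q3 : 0 <= t ^+ 2 * (rho ^+ 2 + 2 * (K * a) - 2 * t * K * rho - D ^+ 2)
      + (t ^+ 2 * K) ^+ 2.
    apply: addr_ge0; last exact: sqr_ge0.
    apply: mulr_ge0; first exact: sqr_ge0.
    have := sqr_ge0 rho; lra.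
  have -> : (a + (t ^+ 2 * K - t * rho)) ^+ 2 = a ^+ 2 - 2 * t * a * rho + t ^+ 2 * D ^+ 2
     + (t ^+ 2 * (rho ^+ 2 + 2 * (K * a) - 2 * t * K * rho - D ^+ 2)
      + (t ^+ 2 * K) ^+ 2) by ring.
  lra.
have Hs : \sum_(j < k) `|y - x j| <= \sum_(j < k) (`|m - x j| +
     (if r < `|x j - z| then t * D else t ^+ 2 * K - t * rho)).
  by apply: ler_sum => j _; exact: bound.
rewrite big_split /= sum_if -/b -/g in Hs.
have : 0 < t * (g * rho - b%:R * D) by rewrite mulr_gt0 // subr_gt0.
move=> hp.
have : b%:R * (t * D) + g * (t ^+ 2 * K - t * rho) < 0.
  have -> : b%:R * (t * D) + g * (t ^+ 2 * K - t * rho)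
     = - (t * (g * rho - b%:R * D)) + t * (t * (2 * g * K)) / 2 by rewrite !expr2; field.
  have := ler_wpM2l (ltW t0) tc3; lra.
lra.
Qed.
Lemma sum_subset_pow (R : comNzRingType) (I : finType) (U : {set I}) (x : R) :
  \sum_(S : {set I} | S \subset U) x ^+ #|S| = (1 + x) ^+ #|U|.
Proof.
pose F i : R := if i \in U then x else 0.
have -> : (1 + x) ^+ #|U| = \prod_i (F i + 1).
  rewrite -prodr_const big_mkcond /=; apply: eq_bigr => i _.
  by rewrite /F; case: (i \in U); rewrite ?add0r // addrC.
rewrite bigA_distr [LHS]big_mkcond /=; apply: eq_bigr => S _.
rewrite -big_mkcond /=.
case: ifP => SU.
  rewrite -prodr_const; apply: eq_bigr => i iS.
  by rewrite /F (fintype.subsetP SU _ iS).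
move/negbT: SU => /fintype.subsetPn [i iS iU].
by rewrite (bigD1 i) //= /F (negbTE iU) mul0r.
Qed.

Lemma seq_fiber (R : realType) d (T : measurableType d) (P : probability T R)
  (I : eqType) (f : T -> I) (s : seq I) :
  (forall i, measurable (f @^-1` [set i])) -> uniq s ->
  measurable (f @^-1` [set i | i \in s]) /\
  P (f @^-1` [set i | i \in s]) = (\sum_(i <- s) P (f @^-1` [set i]))%E.
Proof.
move=> mf; elim: s => [|x s IH] /=.
  move=> _; have -> : f @^-1` [set i | i \in [::]] = set0.
    by apply/seteqP; split => w //=.
  by rewrite big_nil measure0.
move=> /andP[xs us]; have [ms Ps] := IH us.
have -> : f @^-1` [set i | i \in x :: s] = f @^-1` [set x] `|` f @^-1` [set i | i \in s].
  apply/seteqP; split => w /=; rewrite in_cons.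
  - by case/orP => [/eqP ->|h]; [left|right].
  - by case => [->|h]; rewrite ?eqxx ?h ?orbT.
split; first exact: measurableU.
rewrite measureU // ?Ps ?big_cons //; last first.
apply/seteqP; split => w //= [fx fs]; move: xs.
by rewrite -fx fs.
by rewrite -Ps.
Qed.

Lemma fin_fiber (R : realType) d (T : measurableType d) (P : probability T R)
  (I : finType) (f : T -> I) (F : pred I) :
  (forall i, measurable (f @^-1` [set i])) ->
  measurable (f @^-1` [set i | F i]) /\
  P (f @^-1` [set i | F i]) = (\sum_(i | F i) fine (P (f @^-1` [set i])))%:E.
Proof.
move=> mf; have [m e] := @seq_fiber _ _ _ P _ f _ mf (enum_uniq F).
have eqs : [set i | F i] = [set i | i \in enum F].
  by apply/seteqP; split => i /=; rewrite mem_enum.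
rewrite eqs; split => //; rewrite e -sumEFin big_enum /=.
apply: eq_bigr => i _; rewrite fineK //; exact: fin_num_measure.
Qed.

Lemma meas_beq d (T : measurableType d) (g : T -> bool) (c1 c2 : bool) :
  measurable [set w | g w] -> measurable [set w | c1 && g w == c2].
Proof.
move=> mg; case: c1; case: c2 => /=.
- by have -> : [set w | g w == true] = [set w | g w] by apply/seteqP; split => w /=; rewrite eqb_id.
- have -> : [set w | g w == false] = ~` [set w | g w].
    by apply/seteqP; split => w /=; rewrite eqbF_neg => /negP.
  exact: measurableC.
- by have -> : [set w : T | false == true] = set0 by apply/seteqP; split => w.
- by have -> : [set w : T | false == false] = setT by apply/seteqP; split => w.
Qed.

Lemma chernoff (R : realType) d (T : measurableType d) (P : probability T R) k
  (J : {set 'I_k}) (a : 'I_k -> T -> bool) (p lam thr : R) (E : set T) :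
  (forall j, measurable [set w | a j w]) ->
  (forall S : {set 'I_k}, S \subset J ->
     P (\bigcap_(j in [set j | j \in S]) [set w | a j w]) =
     (\prod_(j in S) P [set w | a j w])%E) ->
  (forall j, j \in J -> (P [set w | a j w] <= p%:E)%E) ->
  0 <= p -> 0 <= lam -> measurable E ->
  (forall w, E w -> thr < #|[set j in J | a j w]|%:R) ->
  (P E <= (expR (- (lam * thr)) * (1 + (expR lam - 1) * p) ^+ #|J|)%:E)%E.
Proof.
move=> ma ind hp p0 l0 mE HE.
pose pat w := [set j in J | a j w].
have mfib : forall U, measurable (pat @^-1` [set U]).
  move=> U; have -> : pat @^-1` [set U] =
      \bigcap_(j in [set: 'I_k]) [set w | (j \in J) && a j w == (j \in U)].
    apply/seteqP; split => w /=.
    - by move=> <- j _ /=; rewrite inE.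
    - by move=> h; apply/setP => j; rewrite inE; apply/eqP; exact: h.
  apply: fin_bigcap_measurable; first exact: finite_finset.
  by move=> j _; apply: meas_beq.
pose q U := fine (P (pat @^-1` [set U])).
have q0 : forall U, 0 <= q U by move=> U; apply: fine_ge0.
have F1 : forall S : {set 'I_k}, S \subset J -> \sum_(U : {set 'I_k} | S \subset U) q U <= p ^+ #|S|.
  move=> S SJ.
  have e : \bigcap_(j in [set j | j \in S]) [set w | a j w] = pat @^-1` [set U : {set 'I_k} | S \subset U].
    apply/seteqP; split => w /=.
    - move=> h; apply/fintype.subsetP => j jS; rewrite inE (fintype.subsetP SJ _ jS).
      exact: h.
    - move=> /fintype.subsetP h j /= jS; have := h j jS; rewrite inE => /andP[].
      by [].
  have [_ e2] := @fin_fiber _ _ _ P _ pat (fun U => S \subset U) mfib.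
  have := ind S SJ; rewrite e e2 /= => e3.
  have : ((\sum_(U : {set 'I_k} | S \subset U) q U)%:E <= (p ^+ #|S|)%:E)%E.
    rewrite e3 (eq_bigr (fun j => (fine (P [set w | a j w]))%:E)); last first.
      by move=> j _; rewrite fineK // fin_num_measure.
    rewrite prodEFin lee_fin -prodr_const; apply: ler_prod => j jS.
    rewrite fine_ge0 //=.
    have := hp j (fintype.subsetP SJ _ jS).
    by rewrite -[P [set w | a j w]]fineK ?fin_num_measure // lee_fin.
  by rewrite lee_fin.
have F2 : forall U : {set 'I_k}, ~~ (U \subset J) -> q U = 0.
  move=> U UJ; rewrite /q.
  have -> : pat @^-1` [set U] = set0.
    apply/seteqP; split => w //= pw; move: UJ; rewrite -pw.
    by apply/negP/negPn/fintype.subsetP => j; rewrite inE => /andP[].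
  by rewrite measure0.
have F3 : (P E <= (\sum_(U : {set 'I_k} | thr < #|U|%:R) q U)%:E)%E.
  have [m1 e1] := @fin_fiber _ _ _ P _ pat (fun U => thr < #|U|%:R) mfib.
  rewrite -e1; apply: le_measure; rewrite ?inE //.
apply: le_trans; first exact: F3.
rewrite lee_fin.
set c := expR lam - 1.
have c0 : 0 <= c by rewrite /c subr_ge0; have := expR_ge1Dx lam; lra.
have A : \sum_(U : {set 'I_k} | thr < #|U|%:R) q U <=
    expR (- (lam * thr)) * \sum_(U : {set 'I_k}) q U * (1 + c) ^+ #|U|.
  rewrite big_mkcond mulr_sumr; apply: ler_sum => U _; case: ifP => h.
  - rewrite mulrCA; apply: ler_peMr => //.
    rewrite /c addrC subrK -expRM_natl -expRD.
    apply: le_trans (expR_ge1Dx _).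
    have : 0 <= lam * (#|U|%:R - thr) by apply: mulr_ge0 => //; lra.
    lra.
  - apply: mulr_ge0; first exact: expR_ge0.
    by apply: mulr_ge0 => //; apply: exprn_ge0; lra.
have B : \sum_(U : {set 'I_k}) q U * (1 + c) ^+ #|U| =
    \sum_(S : {set 'I_k}) c ^+ #|S| * \sum_(U : {set 'I_k} | S \subset U) q U.
  rewrite (eq_bigr (fun U : {set 'I_k} => \sum_(S : {set 'I_k} | S \subset U) q U * c ^+ #|S|)); last first.
    by move=> U _; rewrite -sum_subset_pow mulr_sumr.
  rewrite (exchange_big_dep predT) //=; apply: eq_bigr => S _; rewrite mulr_sumr.
  by apply: eq_bigr => U _; rewrite mulrC.
have C : \sum_(S : {set 'I_k}) c ^+ #|S| * \sum_(U : {set 'I_k} | S \subset U) q U <=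
    (1 + c * p) ^+ #|J|.
  rewrite -sum_subset_pow [X in _ <= X]big_mkcond; apply: ler_sum => S _.
  case: ifP => SJ.
  - by rewrite exprMn; apply: ler_wpM2l; [apply: exprn_ge0 | exact: F1].
  - rewrite big1 ?mulr0 // => U SU; apply: F2; apply/negP => UJ.
    by move: SJ; rewrite (fintype.subset_trans SU UJ).
apply: (le_trans A); rewrite B; apply: ler_wpM2l; first exact: expR_ge0.
exact: C.
Qed.
Lemma psi_bound (R : realType) (n : nat) (A a p : R) : 0 < p -> p < a -> a < 1 ->
  A = a * n%:R ->
  0 <= ln (a * (1 - p) / (p * (1 - a))) /\
  expR (- (ln (a * (1 - p) / (p * (1 - a))) * A)) *
    (1 + (expR (ln (a * (1 - p) / (p * (1 - a)))) - 1) * p) ^+ n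
  = expR (- (n%:R * psi a p)).
Proof.
move=> p0 pa a1 ->.
have a0 : 0 < a by exact: (lt_trans p0 pa).
have h1a : 0 < 1 - a by rewrite subr_gt0.
have h1p : 0 < 1 - p by rewrite subr_gt0 (lt_trans pa).
set y := (1 - p) / (1 - a).
have y0 : 0 < y by rewrite divr_gt0.
have ap0 : 0 < a / p by rewrite divr_gt0.
have ex : a * (1 - p) / (p * (1 - a)) = (a / p) * y.
  by rewrite /y; field; apply/andP; split; rewrite gt_eqF.
rewrite ex.
have x1 : 1 <= a / p * y.
  rewrite /y -ex ler_pdivlMr ?mul1r; last by apply: mulr_gt0.
  nra.
split; first exact: ln_ge0.
rewrite lnK ?posrE; last by apply: mulr_gt0.
have e1 : 1 + (a / p * y - 1) * p = y.
  by rewrite /y; field; apply/andP; split; rewrite gt_eqF.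
rewrite e1 -[y in y ^+ n]lnK ?posrE // -expRM_natl -expRD.
congr expR.
rewrite /psi lnM ?posrE //.
have -> : (1 - a) / (1 - p) = y^-1 by rewrite /y invf_div.
rewrite lnV ?posrE //.
ring.
Qed.

Lemma borel_gt (R : realType) (V : normedModType R) (mu : V) (r : R) :
  borel_set [set y : V | r < `|y - mu|].
Proof.
apply: sub_sigma_algebra.
have -> : [set y : V | r < `|y - mu|] = (fun y => `|y - mu|) @^-1` [set x : R | x > r].
  by [].
apply: open_comp; last exact: open_gt.
move=> y _.
have := @continuous_comp _ _ _ (fun y : V => y - mu) (fun v : V => `|v|) y.
apply.
  apply: continuousB; [exact: cvg_id | exact: cst_continuous].
exact: norm_continuous.
Qed.

Theorem mainTheorem5 (R : realType) (V : completeNormedModType R)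
  (d : measure_display) (T : measurableType d) (P : probability T R)
  (mu : V) (alpha p eps tau : R) (k : nat) (J : {set 'I_k})
  (muh : 'I_k -> T -> V) (med : T -> V) :
  separable_space V -> reflexive_space V ->
  0 < alpha < 1 / 2 -> 0 < p < alpha -> 0 < eps ->
  0 <= tau < (alpha - p) / (1 - p) ->
  (#|J|%:R = (1 - tau) * k%:R) ->
  (forall j, random_element (muh j)) ->
  indep_family P J muh ->
  (forall j, j \in J -> (P [set w | (eps < `|muh j w - mu|)%R] <= p%:E)%E) ->
  random_element med ->
  (forall w, is_geomed (fun j => muh j w) (med w)) ->
  ((P [set w | ((2 * (1 - alpha) / (1 - 2 * alpha)) * eps < `|med w - mu|)%R]
     <= (expR (- (k%:R * (1 - tau) * psi ((alpha - tau) / (1 - tau)) p)))%:E)%E)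
  /\
  (hilbert_norm V ->
   (P [set w | (((1 - alpha) * Num.sqrt (1 / (1 - 2 * alpha))) * eps < `|med w - mu|)%R]
     <= (expR (- (k%:R * (1 - tau) * psi ((alpha - tau) / (1 - tau)) p)))%:E)%E).
Proof.
move=> _ _ /andP[a0 a1] /andP[p0 pa] e0 /andP[t0 tlt] hJ mrand ind hp mmed geomed.
have mE : forall c : R, measurable [set w | c * eps < `|med w - mu|].
  by move=> c; exact: (mmed _ (@borel_gt _ _ mu (c * eps))).
have h1p : 0 < 1 - p by lra.
have tlt' : tau * (1 - p) < alpha - p by rewrite -ltr_pdivlMr.
have h1t : 0 < 1 - tau by nra.
set a := (alpha - tau) / (1 - tau).
have pa' : p < a by rewrite /a ltr_pdivlMr //; nra.
have a1' : a < 1 by rewrite /a ltr_pdivrMr // mul1r; lra.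
have key : forall E : set T, measurable E ->
    (forall w, E w -> alpha * k%:R < #|[pred j | eps < `|muh j w - mu|]|%:R) ->
    (P E <= (expR (- (k%:R * (1 - tau) * psi a p)))%:E)%E.
  move=> E mEE HE.
  set thr := (alpha - tau) * k%:R.
  have HE' : forall w, E w -> thr < #|[set j in J | eps < `|muh j w - mu|]|%:R.
    move=> w Ew; have h := HE w Ew.
    pose Pw : {set 'I_k} := finset (fun j => eps < `|muh j w - mu|).
    have c1 : #|[pred j | eps < `|muh j w - mu|]| = #|Pw|.
      by apply: eq_card => j; rewrite !inE.
    have c2 : leq #|Pw| (#|[set j in J | eps < `|muh j w - mu|]| + #|~: J|).
      rewrite -(cardsID J Pw); apply: leq_add; apply: subset_leq_card;
        apply/fintype.subsetP => j; rewrite !inE.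
      - by case/andP => -> ->.
      - by case/andP => -> _.
    have c3 := cardsC J; rewrite card_ord in c3.
    have c4 : (#|~: J| = k - #|J|)%N by lia.
    have c5 : (#|J| <= k)%N by lia.
    rewrite c1 in h.
    have : #|Pw|%:R <= #|[set j in J | eps < `|muh j w - mu|]|%:R + (k%:R - #|J|%:R) :> R.
      by rewrite -natrB // -natrD ler_nat -c4.
    rewrite hJ /thr; lra.
  have [lam0 e] := @psi_bound R #|J| thr a p p0 pa' a1'
     ltac:(by rewrite /thr /a hJ; field; rewrite gt_eqF).
  have -> : k%:R * (1 - tau) = #|J|%:R by rewrite hJ mulrC.
  rewrite -e.
  apply: (@chernoff R d T P k J (fun j w => eps < `|muh j w - mu|)) => //.
  - by move=> j; exact: (mrand j _ (@borel_gt _ _ mu eps)).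
  - move=> S SJ.
    exact: (ind S (fun _ => [set y : V | eps < `|y - mu|]) SJ (fun j _ => @borel_gt _ _ mu eps)).
  - exact: ltW.
have aa : 0 < alpha < 1 / 2 by rewrite a0 a1.
have [k0|kpos] := posnP k.
  have kz : k%:R = 0 :> R by rewrite k0.
  rewrite kz !mul0r oppr0 expR0.
  by split; [|move=> _]; apply: probability_le1; apply: mE.
split.
- apply: key; first exact: mE.
  move=> w hw; exact: (@geo_banach R V k (fun j => muh j w) (med w) mu eps alpha kpos aa (ltW e0) (geomed w) hw).
- move=> hil; apply: key; first exact: mE.
  move=> w hw; exact: (@geo_hilbert R V k (fun j => muh j w) (med w) mu eps alpha kpos aa e0 hil (geomed w) hw).
Qed.
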